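(* Let $(K,\le)$ be a linearly ordered set which is compact in its order topology. The following are equivalent: (1) $K$ is almost totally disconnected; (2) there is a family $\{(a_i,b_i)\}_{i\in I}\subseteq K\times K$ such that (a) $a_i<b_i$ for every $i\in I$; (b) for every $x\in K$ the set $\{i\in I: a_i<x<b_i\}$ is countable; (c) for all $x<y$ in $K$ there is $i\in I$ with $x\le a_i<b_i\le y$.
   Context: For a set $\Gamma$, $\Sigma_0^1[0,1]^\Gamma$ is the subspace of $[0,1]^\Gamma$ (product topology) consisting of those $x$ with $x_\gamma\in\{0,1\}$ for all but countably many $\gamma$. A compact space is almost totally disconnected if it is homeomorphic to a subspace of $\Sigma_0^1[0,1]^\Gamma$ for some set $\Gamma$. *)

(* Defs.v *)
From Stdlib Require Import Reals List Classical.
Open Scope R_scope.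

Definition countable {A : Type} (S : A -> Prop) : Prop :=
  exists g : A -> nat, forall a b, S a -> S b -> g a = g b -> a = b.

Definition generated_open {X : Type} (SB : (X -> Prop) -> Prop) (U : X -> Prop) : Prop :=
  forall x, U x -> exists l : list (X -> Prop),
    (forall V, In V l -> SB V /\ V x) /\
    (forall y, (forall V, In V l -> V y) -> U y).

Definition compact_space {X : Type} (op : (X -> Prop) -> Prop) : Prop :=
  forall F : (X -> Prop) -> Prop,
    (forall U, F U -> op U) ->
    (forall x, exists U, F U /\ U x) ->
    exists l : list (X -> Prop),
      (forall U, In U l -> F U) /\ (forall x, exists U, In U l /\ U x).

Definition continuous {X Y : Type} (opX : (X -> Prop) -> Prop)
  (opY : (Y -> Prop) -> Prop) (f : X -> Y) : Prop :=
  forall W, opY W -> opX (fun x => W (f x)).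

(* f is a homeomorphism of X onto its image f(X) (with the subspace topology). *)
Definition embedding {X Y : Type} (opX : (X -> Prop) -> Prop)
  (opY : (Y -> Prop) -> Prop) (f : X -> Y) : Prop :=
  (forall x y, f x = f y -> x = y) /\
  continuous opX opY f /\
  (forall U, opX U -> exists W, opY W /\ forall x, U x <-> W (f x)).

Definition linear_order {K : Type} (le : K -> K -> Prop) : Prop :=
  (forall x, le x x) /\
  (forall x y, le x y -> le y x -> x = y) /\
  (forall x y z, le x y -> le y z -> le x z) /\
  (forall x y, le x y \/ le y x).

Definition lt_of {K : Type} (le : K -> K -> Prop) (x y : K) : Prop :=
  le x y /\ x <> y.

Definition order_subbasis {K : Type} (le : K -> K -> Prop) (V : K -> Prop) : Prop :=
  (exists a, forall y, V y <-> lt_of le y a) \/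
  (exists a, forall y, V y <-> lt_of le a y).

Definition order_open {K : Type} (le : K -> K -> Prop) : (K -> Prop) -> Prop :=
  generated_open (order_subbasis le).

Definition R_open (V : R -> Prop) : Prop :=
  forall t, V t -> exists e, 0 < e /\ forall s, Rabs (s - t) < e -> V s.

Definition prod_subbasis (Gamma : Type) (W : (Gamma -> R) -> Prop) : Prop :=
  exists (g : Gamma) (V : R -> Prop), R_open V /\ forall x, W x <-> V (x g).

Definition prod_open (Gamma : Type) : ((Gamma -> R) -> Prop) -> Prop :=
  generated_open (prod_subbasis Gamma).

Definition in_Sigma01 {Gamma : Type} (x : Gamma -> R) : Prop :=
  (forall g, 0 <= x g <= 1) /\ countable (fun g => x g <> 0 /\ x g <> 1).

Definition almost_totally_disconnected {X : Type} (op : (X -> Prop) -> Prop) : Prop :=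
  exists (Gamma : Type) (f : X -> (Gamma -> R)),
    (forall x, in_Sigma01 (f x)) /\ embedding op (prod_open Gamma) f.

(* Main.v *)
Require Import Defs.
From Stdlib Require Import Reals List Classical ClassicalEpsilon FunctionalExtensionality Lra Lia Arith ZArith Cantor.
Open Scope R_scope.

Section Ord.
Variable K : Type.
Variable le : K -> K -> Prop.
Hypothesis Hlin : linear_order le.
Notation lt := (lt_of le).

Lemma le_refl' x : le x x. Proof. apply Hlin. Qed.
Lemma le_antisym' x y : le x y -> le y x -> x = y. Proof. apply Hlin. Qed.
Lemma le_trans' x y z : le x y -> le y z -> le x z. Proof. apply Hlin. Qed.
Lemma le_total' x y : le x y \/ le y x. Proof. apply Hlin. Qed.

Lemma lt_irr x : ~ lt x x. Proof. intros [_ H]; auto. Qed.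
Lemma lt_le x y : lt x y -> le x y. Proof. intros [H _]; auto. Qed.
Lemma not_le_lt x y : ~ le x y -> lt y x.
Proof. intros H. destruct (le_total' x y); [tauto|]. split; auto. intro; subst; apply H, le_refl'. Qed.
Lemma lt_not_le x y : lt x y -> ~ le y x.
Proof. intros [H1 H2] H3. apply H2, le_antisym'; auto. Qed.
Lemma not_lt_le x y : ~ lt x y -> le y x.
Proof. intros H. destruct (classic (le y x)); auto. exfalso; apply H, not_le_lt; auto. Qed.
Lemma lt_le_trans x y z : lt x y -> le y z -> lt x z.
Proof. intros H1 H2. split. eapply le_trans'; eauto using lt_le. intro; subst.
  apply (lt_not_le _ _ H1); auto. Qed.
Lemma le_lt_trans x y z : le x y -> lt y z -> lt x z.
Proof. intros H1 H2. split. eapply le_trans'; eauto using lt_le. intro; subst.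
  apply (lt_not_le _ _ H2); auto. Qed.
Lemma lt_trans' x y z : lt x y -> lt y z -> lt x z.
Proof. intros H1 H2. eapply lt_le_trans; eauto using lt_le. Qed.
Lemma neq_lt x y : x <> y -> lt x y \/ lt y x.
Proof. intros H. destruct (le_total' x y); [left|right]; split; auto. Qed.
Lemma lt_trich x y : lt x y \/ x = y \/ lt y x.
Proof. destruct (classic (x = y)); auto. destruct (neq_lt x y); auto. Qed.

Lemma open_ext U U' : (forall x, U x <-> U' x) -> order_open le U -> order_open le U'.
Proof. intros E H x Hx. destruct (H x) as [l [H1 H2]]. apply E; auto.
  exists l; split; auto. intros y Hy; apply E; auto. Qed.

Lemma open_union U U' : order_open le U -> order_open le U' -> order_open le (fun x => U x \/ U' x).
Proof. intros H H' x [Hx|Hx].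
  destruct (H x Hx) as [l [H1 H2]]; exists l; split; auto.
  destruct (H' x Hx) as [l [H1 H2]]; exists l; split; auto. Qed.

Lemma ray_up_open c : order_open le (fun y => lt c y).
Proof. intros x Hx. exists ((fun y => lt c y) :: nil). split.
  - intros V [<-|[]]. split; auto. right. exists c. tauto.
  - intros y Hy. apply Hy. left; auto. Qed.
Lemma ray_down_open c : order_open le (fun y => lt y c).
Proof. intros x Hx. exists ((fun y => lt y c) :: nil). split.
  - intros V [<-|[]]. split; auto. left. exists c. tauto.
  - intros y Hy. apply Hy. left; auto. Qed.

Definition closed (S : K -> Prop) := order_open le (fun x => ~ S x).

Lemma closed_inter S S' : closed S -> closed S' -> closed (fun x => S x /\ S' x).
Proof. intros H H'. unfold closed. eapply open_ext; [|apply (open_union _ _ H H')].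
  intros x; simpl. tauto. Qed.
Lemma closed_ge c : closed (fun y => le c y).
Proof. unfold closed. eapply open_ext; [|apply (ray_down_open c)]. intros x; split.
  intros H1 H2. apply (lt_not_le _ _ H1); auto. apply not_le_lt. Qed.
Lemma closed_le c : closed (fun y => le y c).
Proof. unfold closed. eapply open_ext; [|apply (ray_up_open c)]. intros x; split.
  intros H1 H2. apply (lt_not_le _ _ H1); auto. apply not_le_lt. Qed.

Lemma compact_max (Hc : compact_space (order_open le)) S x0 :
  closed S -> S x0 -> exists m, S m /\ forall s, S s -> le s m.
Proof.
  intros HS Hx0. apply NNPP; intro Hno.
  assert (Hup : forall m, S m -> exists s, S s /\ lt m s).
  { intros m Hm. apply NNPP; intro H. apply Hno. exists m; split; auto.
    intros s Hs. apply not_lt_le. intro; apply H; eauto. }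
  set (F := fun U : K -> Prop => (U = fun x => ~ S x) \/ exists s, S s /\ U = fun y => lt y s).
  destruct (Hc F) as [l [Hl Hcov]].
  - intros U [->|[s [_ ->]]]. apply HS. apply ray_down_open.
  - intros x. destruct (classic (S x)) as [Hs|Hs].
    + destruct (Hup x Hs) as [s [Hs' Hlt]]. exists (fun y => lt y s); split; auto.
      try (right; eauto).
    + exists (fun x => ~ S x); split; auto. left; auto.
  - assert (Hinv : forall l', (forall U, In U l' -> F U) -> exists m, S m /\ forall U, In U l' -> ~ U m).
    { induction l' as [|U l' IH]; intros Hl'.
      - exists x0; split; [auto | intros U []].
      - destruct IH as [m [Hm Hm']]. intros; apply Hl'; right; auto.
        destruct (Hl' U (or_introl eq_refl)) as [->|[s [Hs ->]]].
        + exists m; split; auto. intros V [<-|HV]; auto.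
        + destruct (classic (lt m s)) as [Hms|Hms].
          * exists s; split; auto. intros V [<-|HV]. apply lt_irr.
            destruct (Hl' V (or_intror HV)) as [->|[s' [Hs' ->]]]. tauto.
            intros Hss'. apply (Hm' _ HV). simpl. eapply lt_trans'; eauto.
          * exists m; split; auto. intros V [<-|HV]; auto. }
    destruct (Hinv l Hl) as [m [Hm Hm']]. destruct (Hcov m) as [U [HU HUm]].
    eapply Hm'; eauto.
Qed.

End Ord.

Section Flip.
Variable K : Type.
Variable le : K -> K -> Prop.
Hypothesis Hlin : linear_order le.
Notation lt := (lt_of le).
Definition fle (x y : K) := le y x.

Lemma flin : linear_order fle.
Proof. destruct Hlin as [A [B [C D]]]. unfold fle; repeat split; eauto.
  Qed.

Lemma flt x y : lt_of fle x y <-> lt y x.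
Proof. unfold lt_of, fle. split; intros [H1 H2]; split; auto. Qed.

Lemma fsub V : order_subbasis fle V <-> order_subbasis le V.
Proof. unfold order_subbasis. split; intros [[a H]|[a H]].
  - right; exists a; intros y; rewrite H, flt; tauto.
  - left; exists a; intros y; rewrite H, flt; tauto.
  - right; exists a; intros y; rewrite H, flt; tauto.
  - left; exists a; intros y; rewrite H, flt; tauto. Qed.

Lemma fopen U : order_open fle U <-> order_open le U.
Proof. unfold order_open, generated_open. split; intros H x Hx;
  destruct (H x Hx) as [l [H1 H2]]; exists l; split; auto;
  intros V HV; destruct (H1 V HV); split; auto; apply fsub; auto. Qed.

Lemma fcompact : compact_space (order_open le) -> compact_space (order_open fle).
Proof. intros Hc F HF Hcov. apply Hc; auto. intros U HU; apply fopen; auto. Qed.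

Lemma compact_min (Hc : compact_space (order_open le)) S x0 :
  closed K le S -> S x0 -> exists m, S m /\ forall s, S s -> le m s.
Proof. intros HS Hx. apply (compact_max K fle flin (fcompact Hc) S x0); auto.
  unfold closed. apply fopen; auto. Qed.

Lemma gap_lemma (Hc : compact_space (order_open le)) P Q x y :
  closed K le P -> closed K le Q -> P x -> Q y -> le x y ->
  exists a b, le x a /\ le a b /\ le b y /\ P a /\ Q b /\
    forall z, lt a z -> lt z b -> ~ P z /\ ~ Q z.
Proof.
  intros HP HQ Px Qy Hxy.
  destruct (compact_max K le Hlin Hc (fun w => (le x w /\ le w y) /\ P w) x) as [a [[[Hxa Hay] Pa] Ha]].
  { apply closed_inter; auto. apply closed_inter; auto. apply closed_ge; auto. apply closed_le; auto. }
  { split; auto. split; auto. apply (le_refl' K le Hlin). }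
  destruct (compact_min Hc (fun w => (le a w /\ le w y) /\ Q w) y) as [b [[[Hab Hby] Qb] Hb]].
  { apply closed_inter; auto. apply closed_inter; auto. apply closed_ge; auto. apply closed_le; auto. }
  { split; auto. split; auto. apply (le_refl' K le Hlin). }
  exists a, b. repeat split; auto.
  - intros Pz. apply (lt_not_le K le Hlin _ _ H). apply Ha. split; auto. split.
    apply (le_trans' K le Hlin _ a); auto. apply (lt_le K le _ _ H).
    apply (le_trans' K le Hlin _ b); auto. apply (lt_le K le _ _ H0).
  - intros Qz. apply (lt_not_le K le Hlin _ _ H0). apply Hb. split; auto. split.
    apply (lt_le K le _ _ H). apply (le_trans' K le Hlin _ b); auto. apply (lt_le K le _ _ H0).
Qed.
End Flip.

Definition dy (k n : nat) : R := INR k / 2 ^ n.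

Lemma pow2_pos n : 0 < 2 ^ n.
Proof. apply pow_lt; lra. Qed.

Lemma INR_pow2 n : INR (2 ^ n) = 2 ^ n.
Proof. rewrite pow_INR. reflexivity. Qed.

Lemma pow2_ge n : INR n + 1 <= 2 ^ n.
Proof. induction n. simpl; lra. rewrite S_INR. simpl. pose proof (pos_INR n). lra. Qed.

Lemma dy_nonneg k n : 0 <= dy k n.
Proof. unfold dy. apply Rle_mult_inv_pos. apply pos_INR. apply pow2_pos. Qed.

Lemma dy_le1 k n : (k <= 2 ^ n)%nat -> dy k n <= 1.
Proof. intros H. unfold dy. apply le_INR in H. rewrite INR_pow2 in H.
  pose proof (pow2_pos n). apply Rmult_le_reg_r with (2^n); auto.
  unfold Rdiv. rewrite Rmult_assoc, Rinv_l; lra. Qed.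

Lemma dy_cross k n n' : dy k n * (2^n * 2^n') = INR (k * 2 ^ n').
Proof. unfold dy. rewrite mult_INR, INR_pow2. pose proof (pow2_pos n). field. lra. Qed.

Lemma dy_lt_nat k n k' n' : dy k n < dy k' n' -> (k * 2 ^ n' < k' * 2 ^ n)%nat.
Proof. intros H. apply INR_lt. rewrite <- (dy_cross k n n').
  replace (INR (k' * 2 ^ n)) with (dy k' n' * (2^n' * 2^n)) by (rewrite dy_cross; auto).
  rewrite (Rmult_comm (2^n') (2^n)). apply Rmult_lt_compat_r; auto.
  apply Rmult_lt_0_compat; apply pow2_pos. Qed.

Lemma dy_le_nat k n k' n' : dy k n <= dy k' n' -> (k * 2 ^ n' <= k' * 2 ^ n)%nat.
Proof. intros H. apply INR_le. rewrite <- (dy_cross k n n').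
  replace (INR (k' * 2 ^ n)) with (dy k' n' * (2^n' * 2^n)) by (rewrite dy_cross; auto).
  rewrite (Rmult_comm (2^n') (2^n)). apply Rmult_le_compat_r; auto.
  left; apply Rmult_lt_0_compat; apply pow2_pos. Qed.

Lemma dyadic_dense u v : 0 <= u -> u < v -> v <= 1 ->
  exists n k, (k <= 2 ^ n)%nat /\ u < dy k n < v.
Proof.
  intros H0 Huv Hv1.
  destruct (archimed (/ (v - u))) as [Hup _].
  set (n := Z.to_nat (up (/ (v - u)))).
  assert (Hn : / (v - u) < 2 ^ n).
  { pose proof (pow2_ge n). unfold n in *.
    destruct (Z_lt_le_dec (up (/ (v-u))) 0) as [Hz|Hz].
    - apply IZR_lt in Hz. pose proof (Rinv_0_lt_compat (v-u)). lra.
    - rewrite INR_IZR_INZ, Z2Nat.id in H; auto. lra. }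
  assert (Hsmall : / 2 ^ n < v - u).
  { pose proof (pow2_pos n). assert (0 < v - u) by lra.
    rewrite <- (Rinv_inv (v - u)). apply Rinv_lt_contravar; auto.
    apply Rmult_lt_0_compat; auto. apply Rinv_0_lt_compat; auto. }
  destruct (archimed (u * 2 ^ n)) as [Hz1 Hz2].
  set (z := up (u * 2 ^ n)) in *.
  assert (Hzpos : (0 <= z)%Z).
  { apply le_IZR. pose proof (pow2_pos n). assert (0 <= u * 2^n) by (apply Rmult_le_pos; lra). lra. }
  set (k := Z.to_nat z).
  assert (Hk : INR k = IZR z) by (unfold k; rewrite INR_IZR_INZ, Z2Nat.id; auto).
  pose proof (pow2_pos n).
  assert (Hlow : u < dy k n).
  { unfold dy. rewrite Hk. apply Rmult_lt_reg_r with (2^n); auto.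
    unfold Rdiv; rewrite Rmult_assoc, Rinv_l; lra. }
  assert (Hhigh : dy k n < v).
  { unfold dy. rewrite Hk. apply Rmult_lt_reg_r with (2^n); auto.
    unfold Rdiv; rewrite Rmult_assoc, Rinv_l by lra.
    apply Rmult_lt_compat_r with (r := 2^n) in Hsmall; auto.
    rewrite Rinv_l in Hsmall by lra. rewrite Rmult_minus_distr_r in Hsmall. lra. }
  exists n, k. split; [|lra].
  apply Nat.lt_le_incl, INR_lt. rewrite INR_pow2.
  unfold dy in Hhigh. apply Rmult_lt_reg_r with (/ 2^n). apply Rinv_0_lt_compat; auto.
  rewrite Rinv_r by lra. unfold Rdiv in Hhigh. lra.
Qed.

Definition lcont {K : Type} (le : K -> K -> Prop) (phi : K -> R) : Prop :=
  forall x eps, 0 < eps -> exists l : list (K -> Prop),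
    (forall V, In V l -> order_subbasis le V /\ V x) /\
    (forall y, (forall V, In V l -> V y) -> Rabs (phi y - phi x) < eps).

Section Dense.
Variable K : Type.
Variable le : K -> K -> Prop.
Hypothesis Hlin : linear_order le.
Notation lt := (lt_of le).
Variables a b : K.
Hypothesis Hab : lt a b.
Hypothesis Hd : forall c d, le a c -> le d b -> lt c d -> exists e, lt c e /\ lt e d.

Definition mid (c d : K) : K := epsilon (inhabits c) (fun e => lt c e /\ lt e d).

Lemma mid_spec c d : le a c -> le d b -> lt c d -> lt c (mid c d) /\ lt (mid c d) d.
Proof. intros H1 H2 H3. unfold mid. apply (epsilon_spec (inhabits c) (fun e => lt c e /\ lt e d)).
  apply Hd; auto. Qed.

Fixpoint Q (n k : nat) : K :=
  match n with
  | O => if Nat.eqb k 0 then a else b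
  | S n' => if Nat.even k then Q n' (Nat.div2 k)
            else mid (Q n' (Nat.div2 k)) (Q n' (S (Nat.div2 k)))
  end.

Lemma Qsucc n k : Q (S n) k = if Nat.even k then Q n (Nat.div2 k)
            else mid (Q n (Nat.div2 k)) (Q n (S (Nat.div2 k))).
Proof. reflexivity. Qed.
Lemma Qeven n j : Q (S n) (2 * j) = Q n j.
Proof. rewrite Qsucc, Nat.even_even, Nat.div2_double. reflexivity. Qed.
Lemma Qodd n j : Q (S n) (S (2 * j)) = mid (Q n j) (Q n (S j)).
Proof. rewrite Qsucc. replace (S (2 * j)) with (2*j+1)%nat by lia.
  rewrite Nat.even_odd, Nat.div2_odd'. reflexivity. Qed.

Lemma Qstep n : forall k, (k < 2 ^ n)%nat -> lt (Q n k) (Q n (S k)) /\ le a (Q n k) /\ le (Q n (S k)) b.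
Proof.
  induction n; intros k Hk.
  - simpl in Hk. assert (k = 0%nat) by lia. subst. simpl.
    split; auto. split; apply (le_refl' K le Hlin).
  - destruct (Nat.Even_or_Odd k) as [[j ->]|[j ->]].
    + assert (Hj : (j < 2 ^ n)%nat) by (simpl in Hk; lia).
      destruct (IHn j Hj) as [H1 [H2 H3]].
      rewrite Qeven, Qodd. destruct (mid_spec _ _ H2 H3 H1) as [M1 M2].
      split; [exact M1|split; [auto|]]. apply (lt_le K le). eapply (lt_le_trans K le Hlin); eauto.
    + assert (Hj : (j < 2 ^ n)%nat) by (simpl in Hk; lia).
      destruct (IHn j Hj) as [H1 [H2 H3]].
      replace (2 * j + 1)%nat with (S (2 * j)) by lia.
      replace (S (S (2 * j))) with (2 * S j)%nat by lia.
      rewrite Qeven, Qodd. destruct (mid_spec _ _ H2 H3 H1) as [M1 M2].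
      split; [exact M2|split; [|auto]]. apply (lt_le K le). eapply (le_lt_trans K le Hlin); eauto.
Qed.

Lemma Qmono n k k' : (k < k')%nat -> (k' <= 2 ^ n)%nat -> lt (Q n k) (Q n k').
Proof.
  intros H. induction H; intros Hk.
  - apply Qstep; lia.
  - eapply (lt_trans' K le Hlin). apply IHle; lia. apply Qstep; lia.
Qed.

Lemma Qlift j n k : Q (j + n) (k * 2 ^ j) = Q n k.
Proof. induction j. simpl. rewrite Nat.mul_1_r; auto.
  replace (k * 2 ^ S j)%nat with (2 * (k * 2 ^ j))%nat by (simpl; lia).
  simpl plus. rewrite Qeven; auto. Qed.

Lemma Qcmp n k n' k' : (k <= 2 ^ n)%nat -> (k' <= 2 ^ n')%nat ->
  (k * 2 ^ n' < k' * 2 ^ n)%nat -> lt (Q n k) (Q n' k').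
Proof.
  intros H1 H2 H3. rewrite <- (Qlift n' n k), <- (Qlift n n' k').
  rewrite (Nat.add_comm n n'). apply Qmono; auto.
  rewrite Nat.pow_add_r. apply Nat.mul_le_mono_r; auto.
Qed.

Lemma Qeq n k n' k' : (k * 2 ^ n' = k' * 2 ^ n)%nat -> Q n k = Q n' k'.
Proof. intros H. rewrite <- (Qlift n' n k), <- (Qlift n n' k'). rewrite (Nat.add_comm n n'), H; auto. Qed.

Lemma Qdy_lt n k n' k' : (k <= 2 ^ n)%nat -> (k' <= 2 ^ n')%nat ->
  dy k n < dy k' n' -> lt (Q n k) (Q n' k').
Proof. intros H1 H2 H3. apply Qcmp; auto. apply dy_lt_nat; auto. Qed.

Lemma Qdy_le n k n' k' : (k <= 2 ^ n)%nat -> (k' <= 2 ^ n')%nat ->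
  dy k n <= dy k' n' -> le (Q n k) (Q n' k').
Proof. intros H1 H2 H3. apply dy_le_nat in H3. destruct (le_lt_eq_dec _ _ H3).
  apply (lt_le K le). apply Qcmp; auto. rewrite (Qeq n k n' k'); auto. apply (le_refl' K le Hlin). Qed.

Definition Dset (x : K) (r : R) : Prop :=
  r = 0 \/ exists n k, (k <= 2 ^ n)%nat /\ r = dy k n /\ le (Q n k) x.

Lemma Dset_bound x : bound (Dset x).
Proof. exists 1. intros r [->|[n [k [H1 [-> _]]]]]. lra. apply dy_le1; auto. Qed.
Lemma Dset_ne x : exists r, Dset x r.
Proof. exists 0; left; auto. Qed.

Definition phi (x : K) : R := proj1_sig (completeness (Dset x) (Dset_bound x) (Dset_ne x)).

Lemma phi_ub x r : Dset x r -> r <= phi x.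
Proof. unfold phi. destruct completeness as [m [H1 H2]]. simpl. apply H1. Qed.
Lemma phi_lub x s : (forall r, Dset x r -> r <= s) -> phi x <= s.
Proof. unfold phi. destruct completeness as [m [H1 H2]]. simpl. apply H2. Qed.
Lemma phi_approx x r : r < phi x -> exists r', Dset x r' /\ r < r'.
Proof. intros H. apply NNPP; intro N. assert (phi x <= r); [|lra].
  apply phi_lub. intros r' Hr'. destruct (Rle_dec r' r); auto. exfalso; apply N; exists r'; split; auto; lra. Qed.

Lemma phi_01 x : 0 <= phi x <= 1.
Proof. split. apply phi_ub; left; auto. apply phi_lub. intros r [->|[n [k [H1 [-> _]]]]]. lra. apply dy_le1; auto. Qed.

Lemma Q00 : Q 0 0 = a. Proof. reflexivity. Qed.
Lemma Q01 : Q 0 1 = b. Proof. reflexivity. Qed.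

Lemma phi_low x : le x a -> phi x = 0.
Proof. intros H. pose proof (phi_01 x). assert (phi x <= 0); [|lra].
  apply phi_lub. intros r [->|[n [k [H1 [-> H2]]]]]. lra.
  destruct (Rle_dec (dy k n) 0) as [|N]; auto. exfalso.
  assert (lt (Q 0 0) (Q n k)). apply Qdy_lt; auto. simpl; lia. replace (dy 0 0) with 0 by (unfold dy; simpl; lra). lra.
  apply (lt_not_le K le Hlin _ _ H3). eapply (le_trans' K le Hlin); eauto. Qed.

Lemma phi_high x : le b x -> phi x = 1.
Proof. intros H. pose proof (phi_01 x). assert (1 <= phi x); [|lra].
  apply phi_ub. right. exists 0%nat, 1%nat. split; [simpl; lia|]. split. unfold dy; simpl; lra.
  rewrite Q01; auto. Qed.

Lemma phi_lcont : lcont le phi.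
Proof.
  intros x eps Heps. pose proof (phi_01 x) as H01.
  assert (Hlow : exists l : list (K -> Prop), (forall V, In V l -> order_subbasis le V /\ V x) /\
     forall y, (forall V, In V l -> V y) -> phi x - eps < phi y).
  { destruct (Rlt_le_dec (phi x - eps) 0) as [Hn|Hp].
    - exists nil. split. intros V []. intros y _. pose proof (phi_01 y); lra.
    - destruct (dyadic_dense (phi x - eps) (phi x)) as [n [k [Hk [Hr1 Hr2]]]]; try lra.
      destruct (phi_approx x _ Hr2) as [r' [[->|[n' [k' [Hk' [-> Hq]]]]] Hrr']].
      + pose proof (dy_nonneg k n); lra.
      + assert (Hlt : lt (Q n k) x) by (eapply (lt_le_trans K le Hlin); [apply Qdy_lt|]; eauto).
        exists ((fun y => lt (Q n k) y) :: nil). split.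
        * intros V [<-|[]]. split; auto. right. exists (Q n k). tauto.
        * intros y Hy. specialize (Hy _ (or_introl eq_refl)). simpl in Hy.
          assert (dy k n <= phi y); [|lra]. apply phi_ub. right. exists n, k. split; auto. split; auto.
          apply (lt_le K le); auto. }
  assert (Hhigh : exists l : list (K -> Prop), (forall V, In V l -> order_subbasis le V /\ V x) /\
     forall y, (forall V, In V l -> V y) -> phi y < phi x + eps).
  { destruct (Rlt_le_dec 1 (phi x + eps)) as [Hn|Hp].
    - exists nil. split. intros V []. intros y _. pose proof (phi_01 y); lra.
    - destruct (dyadic_dense (phi x) (phi x + eps)) as [n [k [Hk [Hr1 Hr2]]]]; try lra.
      assert (Hlt : lt x (Q n k)).
      { apply (not_le_lt K le Hlin). intro Hq. assert (dy k n <= phi x); [|lra].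
        apply phi_ub. right. exists n, k; auto. }
      exists ((fun y => lt y (Q n k)) :: nil). split.
      * intros V [<-|[]]. split; auto. left. exists (Q n k). tauto.
      * intros y Hy. specialize (Hy _ (or_introl eq_refl)). simpl in Hy.
        assert (phi y <= dy k n); [|lra]. apply phi_lub.
        intros r [->|[n' [k' [Hk' [-> Hq]]]]]. apply dy_nonneg.
        destruct (Rle_dec (dy k' n') (dy k n)) as [|N]; auto. exfalso.
        assert (lt (Q n k) (Q n' k')) by (apply Qdy_lt; auto; lra).
        apply (lt_not_le K le Hlin _ _ H). apply (lt_le K le).
        eapply (le_lt_trans K le Hlin); eauto. }
  destruct Hlow as [l1 [A1 B1]]. destruct Hhigh as [l2 [A2 B2]].
  exists (l1 ++ l2). split.
  - intros V HV. apply in_app_or in HV. destruct HV; auto.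
  - intros y Hy. assert (phi x - eps < phi y). apply B1; intros; apply Hy, in_or_app; auto.
    assert (phi y < phi x + eps). apply B2; intros; apply Hy, in_or_app; auto.
    apply Rabs_def1; lra.
Qed.

End Dense.

Lemma urysohn (K : Type) (le : K -> K -> Prop) (Hlin : linear_order le) a b :
  lt_of le a b -> exists phi : K -> R,
    (forall x, 0 <= phi x <= 1) /\ (forall x, le x a -> phi x = 0) /\
    (forall x, le b x -> phi x = 1) /\ lcont le phi.
Proof.
  intros Hab.
  destruct (classic (forall c d, le a c -> le d b -> lt_of le c d -> exists e, lt_of le c e /\ lt_of le e d)) as [Hd|Hnd].
  - exists (phi K le a b). split; [|split; [|split]].
    + intros; apply phi_01.
    + intros; eapply phi_low; eauto.
    + intros; eapply phi_high; eauto.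
    + eapply phi_lcont; eauto.
  - apply not_all_ex_not in Hnd as [c Hnd]. apply not_all_ex_not in Hnd as [d Hnd].
    assert (Hac : le a c) by (apply NNPP; intro; apply Hnd; tauto).
    assert (Hdb : le d b) by (apply NNPP; intro; apply Hnd; tauto).
    assert (Hcd : lt_of le c d) by (apply NNPP; intro; apply Hnd; tauto).
    assert (Hno : forall e, ~ (lt_of le c e /\ lt_of le e d)) by (intros e He; apply Hnd; eauto).
    assert (Hcx : forall x, ~ lt_of le c x -> lt_of le x d).
    { intros x Hx. apply not_lt_le in Hx; auto. eapply le_lt_trans; eauto. }
    assert (Hxd : forall x, lt_of le x d -> ~ lt_of le c x).
    { intros x H1 H2. apply (Hno x); auto. }
    exists (fun x => if excluded_middle_informative (lt_of le c x) then 1 else 0).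
    split; [|split; [|split]].
    + intros x. destruct excluded_middle_informative; lra.
    + intros x Hx. destruct excluded_middle_informative as [H|]; auto.
      exfalso. apply (lt_not_le K le Hlin _ _ H). eapply le_trans'; eauto.
    + intros x Hx. destruct excluded_middle_informative as [|H]; auto.
      exfalso. apply Hcx in H. apply (lt_not_le K le Hlin _ _ H). eapply le_trans'; eauto.
    + intros x eps Heps. destruct (excluded_middle_informative (lt_of le c x)) as [H|H].
      * exists ((fun y => lt_of le c y) :: nil). split.
        -- intros V [<-|[]]. split; auto. right; exists c; tauto.
        -- intros y Hy. specialize (Hy _ (or_introl eq_refl)). simpl in Hy.
           destruct excluded_middle_informative; [|tauto]. rewrite Rminus_diag, Rabs_R0; auto.
      * exists ((fun y => lt_of le y d) :: nil). split.
        -- intros V [<-|[]]. split; auto. left; exists d; tauto.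
        -- intros y Hy. specialize (Hy _ (or_introl eq_refl)). simpl in Hy.
           destruct excluded_middle_informative as [Hc|]. exfalso; eapply Hxd; eauto.
           rewrite Rminus_diag, Rabs_R0; auto.
Qed.

Lemma R_open_gt c : R_open (fun t => c < t).
Proof. intros t Ht. exists (t - c). split. lra. intros s Hs. apply Rabs_def2 in Hs. lra. Qed.
Lemma R_open_lt c : R_open (fun t => t < c).
Proof. intros t Ht. exists (c - t). split. lra. intros s Hs. apply Rabs_def2 in Hs. lra. Qed.

Lemma dir21 (K : Type) (le : K -> K -> Prop) (Hlin : linear_order le)
  (I : Type) (a b : I -> K) :
  (forall i, lt_of le (a i) (b i)) ->
  (forall x, countable (fun i => lt_of le (a i) x /\ lt_of le x (b i))) ->
  (forall x y, lt_of le x y ->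
       exists i, le x (a i) /\ lt_of le (a i) (b i) /\ le (b i) y) ->
  almost_totally_disconnected (order_open le).
Proof.
  intros Hab Hcnt Hsep.
  assert (HF : forall i, exists phi : K -> R,
    (forall x, 0 <= phi x <= 1) /\ (forall x, le x (a i) -> phi x = 0) /\
    (forall x, le (b i) x -> phi x = 1) /\ lcont le phi).
  { intros i. apply urysohn; auto. }
  set (F := fun i => proj1_sig (constructive_indefinite_description _ (HF i))).
  assert (HFp : forall i, (forall x, 0 <= F i x <= 1) /\ (forall x, le x (a i) -> F i x = 0) /\
    (forall x, le (b i) x -> F i x = 1) /\ lcont le (F i)).
  { intros i. unfold F. destruct constructive_indefinite_description; auto. }
  clearbody F.
  set (f := fun x i => F i x).
  exists I, f. split; [|split; [|split]].
  -
    intros x. split.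
    + intros i; apply HFp.
    + destruct (Hcnt x) as [g Hg]. exists g. intros i j [Hi1 Hi2] [Hj1 Hj2] E.
      assert (Hin : forall k, f x k <> 0 -> f x k <> 1 -> lt_of le (a k) x /\ lt_of le x (b k)).
      { intros k H1 H2. unfold f in *. destruct (HFp k) as [_ [A [B _]]]. split.
        - apply (not_le_lt K le Hlin). intro; apply H1; auto.
        - apply (not_le_lt K le Hlin). intro; apply H2; auto. }
      apply Hg; auto.
  -
    intros x y E. apply NNPP; intro N. assert (Hxy : forall x y, lt_of le x y -> f x <> f y).
    { intros u v Huv E'. destruct (Hsep u v Huv) as [i [H1 [_ H3]]].
      assert (f u i = f v i) by (rewrite E'; auto). unfold f in H.
      destruct (HFp i) as [_ [A [B _]]]. rewrite A, B in H; auto. lra. }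
    destruct (neq_lt K le Hlin x y N) as [H|H]; [eapply Hxy; eauto|]. apply (Hxy y x H); auto.
  -
    intros W HW x Hx. destruct (HW (f x) Hx) as [l [H1 H2]].
    assert (Hl : forall l, (forall V, In V l -> prod_subbasis I V /\ V (f x)) ->
      exists L : list (K -> Prop), (forall U, In U L -> order_subbasis le U /\ U x) /\
        forall y, (forall U, In U L -> U y) -> forall V, In V l -> V (f y)).
    { clear H1 H2. induction l0 as [|V l0 IH]; intros Hl0.
      - exists nil. split. intros U []. intros y _ V [].
      - destruct IH as [L [A B]]. intros; apply Hl0; right; auto.
        destruct (Hl0 V (or_introl eq_refl)) as [[g [Vr [HVr HV]]] HVx].
        apply HV in HVx. destruct (HVr _ HVx) as [e [He HVe]].
        destruct (HFp g) as [_ [_ [_ Hc]]]. destruct (Hc x e He) as [L0 [A0 B0]].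
        exists (L0 ++ L). split.
        + intros U HU. apply in_app_or in HU. destruct HU; auto.
        + intros y Hy V' [<-|HV'].
          * apply HV. apply HVe. apply B0. intros; apply Hy, in_or_app; auto.
          * apply B; auto. intros; apply Hy, in_or_app; auto. }
    destruct (Hl l H1) as [L [A B]]. exists L. split; auto.
    intros y Hy. apply H2. apply B; auto.
  -
    intros U HU.
    exists (fun h => exists l : list ((I -> R) -> Prop), (forall V, In V l -> prod_subbasis I V /\ V h) /\
       forall y, (forall V, In V l -> V (f y)) -> U y).
    split.
    + intros h [l [H1 H2]]. exists l. split. intros V HV; apply H1; auto.
      intros h' Hh'. exists l. split; [|exact H2]. intros V HV; split; [exact (proj1 (H1 V HV)) | exact (Hh' V HV)].
    + intros x. split.
      * intros Hx. destruct (HU x Hx) as [L [H1 H2]].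
        assert (HL : forall L, (forall V, In V L -> order_subbasis le V /\ V x) ->
          exists l : list ((I -> R) -> Prop), (forall V, In V l -> prod_subbasis I V /\ V (f x)) /\
            forall y, (forall V, In V l -> V (f y)) -> forall V, In V L -> V y).
        { clear H1 H2. induction L0 as [|V L0 IH]; intros HL0.
          - exists nil. split. intros V []. intros y _ V [].
          - destruct IH as [l [A B]]. intros; apply HL0; right; auto.
            destruct (HL0 V (or_introl eq_refl)) as [[[c Hc]|[c Hc]] HVx].
            + apply Hc in HVx. destruct (Hsep _ _ HVx) as [i [Hi1 [Hi2 Hi3]]].
              exists ((fun h => h i < 1) :: l). split.
              * intros V' [<-|HV']; auto. split.
                -- exists i, (fun t => t < 1). split. apply R_open_lt. tauto.
                -- unfold f. destruct (HFp i) as [_ [A0 _]]. rewrite A0; auto. lra.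
              * intros y Hy V' [<-|HV'].
                -- apply Hc. specialize (Hy _ (or_introl eq_refl)). simpl in Hy. unfold f in Hy.
                   eapply (lt_le_trans K le Hlin); [|apply Hi3].
                   apply (not_le_lt K le Hlin). intro Hb. destruct (HFp i) as [_ [_ [B0 _]]].
                   rewrite B0 in Hy; auto. lra.
                -- apply B; auto. intros; apply Hy; right; auto.
            + apply Hc in HVx. destruct (Hsep _ _ HVx) as [i [Hi1 [Hi2 Hi3]]].
              exists ((fun h => 0 < h i) :: l). split.
              * intros V' [<-|HV']; auto. split.
                -- exists i, (fun t => 0 < t). split. apply R_open_gt. tauto.
                -- unfold f. destruct (HFp i) as [_ [_ [B0 _]]]. rewrite B0; auto. lra.
              * intros y Hy V' [<-|HV'].
                -- apply Hc. specialize (Hy _ (or_introl eq_refl)). simpl in Hy. unfold f in Hy.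
                   eapply (le_lt_trans K le Hlin); [apply Hi1|].
                   apply (not_le_lt K le Hlin). intro Ha. destruct (HFp i) as [_ [A0 _]].
                   rewrite A0 in Hy; auto. lra.
                -- apply B; auto. intros; apply Hy; right; auto. }
        destruct (HL L H1) as [l [A B]]. exists l. split; auto. intros y Hy; apply H2; apply B; auto.
      * intros [l [H1 H2]]. apply H2. intros V HV; apply H1; auto.
Qed.

Definition wr {G : Type} (w : G * ((nat * nat) * (nat * nat))) : R := dy (fst (fst (snd w))) (snd (fst (snd w))).
Definition ws {G : Type} (w : G * ((nat * nat) * (nat * nat))) : R := dy (fst (snd (snd w))) (snd (snd (snd w))).

Definition good {K G : Type} (le : K -> K -> Prop) (f : K -> G -> R) (p : K * K)
  (w : G * ((nat * nat) * (nat * nat))) : Prop :=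
  ws w <= 1 /\
  (forall z, lt_of le (fst p) z -> lt_of le z (snd p) -> wr w < f z (fst w) < ws w) /\
  ~ (wr w < f (fst p) (fst w) < ws w) /\ ~ (wr w < f (snd p) (fst w) < ws w).

Lemma to_nat_inj p q : Cantor.to_nat p = Cantor.to_nat q -> p = q.
Proof. intros H. rewrite <- (cancel_of_to p), <- (cancel_of_to q), H; auto. Qed.

Lemma dir12 (K : Type) (le : K -> K -> Prop) (Hlin : linear_order le)
  (Hc : compact_space (order_open le)) :
  almost_totally_disconnected (order_open le) ->
  exists (I : Type) (a b : I -> K),
    (forall i, lt_of le (a i) (b i)) /\
    (forall x, countable (fun i => lt_of le (a i) x /\ lt_of le x (b i))) /\
    (forall x y, lt_of le x y ->
       exists i, le x (a i) /\ lt_of le (a i) (b i) /\ le (b i) y).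
Proof.
  intros [G [f [Hsig [Hinj [Hcont _]]]]].
  assert (Hgt : forall g r, order_open le (fun x => r < f x g)).
  { intros g r. apply (Hcont (fun h => r < h g)). intros h Hh. exists ((fun h => r < h g) :: nil). split.
    - intros V [<-|[]]. split; auto. exists g, (fun t => r < t). split. apply R_open_gt. tauto.
    - intros h' H'. apply H'; left; auto. }
  assert (Hlt : forall g r, order_open le (fun x => f x g < r)).
  { intros g r. apply (Hcont (fun h => h g < r)). intros h Hh. exists ((fun h => h g < r) :: nil). split.
    - intros V [<-|[]]. split; auto. exists g, (fun t => t < r). split. apply R_open_lt. tauto.
    - intros h' H'. apply H'; left; auto. }
  assert (Hcl1 : forall g r, closed K le (fun x => f x g <= r)).
  { intros g r. unfold closed. eapply open_ext; [|apply (Hgt g r)]. intros x; simpl. split; intros; lra. }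
  assert (Hcl2 : forall g r, closed K le (fun x => r <= f x g)).
  { intros g r. unfold closed. eapply open_ext; [|apply (Hlt g r)]. intros x; simpl. split; intros; lra. }
  set (I := {p : K * K | lt_of le (fst p) (snd p) /\ exists w, good le f p w}).
  exists I, (fun i => fst (proj1_sig i)), (fun i => snd (proj1_sig i)).
  split; [|split].
  - intros i; exact (proj1 (proj2_sig i)).
  - intros z. destruct (Hsig z) as [Hz01 [gz Hgz]].
    set (W := fun i : I => proj1_sig (constructive_indefinite_description _ (proj2 (proj2_sig i)))).
    assert (HW : forall i, good le f (proj1_sig i) (W i)).
    { intros i. unfold W. destruct constructive_indefinite_description; auto. }
    exists (fun i => Cantor.to_nat (gz (fst (W i)), Cantor.to_nat (Cantor.to_nat (fst (snd (W i))), Cantor.to_nat (snd (snd (W i)))))).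
    intros i j [Hi1 Hi2] [Hj1 Hj2] E.
    apply to_nat_inj in E. pose proof (f_equal fst E) as E1. pose proof (f_equal snd E) as E2.
    cbn [fst snd] in E1, E2. apply to_nat_inj in E2.
    pose proof (f_equal fst E2) as E3. pose proof (f_equal snd E2) as E4. cbn [fst snd] in E3, E4.
    apply to_nat_inj in E3. apply to_nat_inj in E4.
    pose proof (HW i) as [Gi1 [Gi2 [Gi3 Gi4]]]. pose proof (HW j) as [Gj1 [Gj2 [Gj3 Gj4]]].
    assert (Hg : fst (W i) = fst (W j)).
    { apply Hgz; auto.
      - specialize (Gi2 z Hi1 Hi2). pose proof (dy_nonneg (fst (fst (snd (W i)))) (snd (fst (snd (W i))))).
        unfold wr, ws in *. split; lra.
      - specialize (Gj2 z Hj1 Hj2). pose proof (dy_nonneg (fst (fst (snd (W j)))) (snd (fst (snd (W j))))).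
        unfold wr, ws in *. split; lra. }
    assert (Hw : W i = W j).
    { destruct (W i) as [g1 [q1 q2]], (W j) as [g3 [q3 q4]]. simpl in *. subst; auto. }
    rewrite <- Hw in Gj2, Gj3, Gj4.
    destruct i as [[ai bi] Hi], j as [[aj bj] Hj]. simpl in *.
    assert (ai = aj).
    { destruct (lt_trich K le Hlin ai aj) as [Ht|[Ht|Ht]]; auto; exfalso.
      - apply Gj3. apply Gi2; auto. eapply (lt_trans' K le Hlin); eauto.
      - apply Gi3. apply Gj2; auto. eapply (lt_trans' K le Hlin); eauto. }
    assert (bi = bj).
    { destruct (lt_trich K le Hlin bi bj) as [Ht|[Ht|Ht]]; auto; exfalso.
      - apply Gi4. apply Gj2; auto. eapply (lt_trans' K le Hlin); eauto.
      - apply Gj4. apply Gi2; auto. eapply (lt_trans' K le Hlin); eauto. }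
    subst. f_equal. apply proof_irrelevance.
  - intros x y Hxy.
    assert (Hne : f x <> f y).
    { intro E. apply Hinj in E. destruct Hxy; auto. }
    assert (Hg : exists g, f x g <> f y g).
    { apply NNPP; intro N. apply Hne. apply functional_extensionality. intros g.
      apply NNPP; intro N'; apply N; eauto. }
    destruct Hg as [g Hg].
    destruct (Hsig x) as [Hx01 _]. destruct (Hsig y) as [Hy01 _].
    specialize (Hx01 g). specialize (Hy01 g).
    assert (Hxyl : le x y) by (apply (lt_le K le); auto).
    destruct (Rlt_le_dec (f x g) (f y g)) as [Huv|Hvu].
    + destruct (dyadic_dense (f x g) (f y g)) as [n1 [k1 [_ [Hr1 Hr2]]]]; try lra.
      destruct (dyadic_dense (dy k1 n1) (f y g)) as [n2 [k2 [_ [Hs1 Hs2]]]]; try lra.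
      destruct (gap_lemma K le Hlin Hc (fun w => f w g <= dy k1 n1) (fun w => dy k2 n2 <= f w g) x y)
        as [a [b [Ha [Hab [Hb [Pa [Qb Hz]]]]]]]; auto; simpl; try lra.
      assert (Habl : lt_of le a b). { split; auto. intro; subst; lra. }
      assert (Hgood : good le f (a, b) (g, ((k1, n1), (k2, n2)))).
      { unfold good, wr, ws; simpl. split; [lra|]. split; [|split; lra].
        intros z H1 H2. destruct (Hz z H1 H2). split; lra. }
      exists (exist _ (a, b) (conj Habl (ex_intro _ _ Hgood))). simpl. auto.
    + assert (Hvu' : f y g < f x g) by (destruct Hvu; auto; congruence).
      destruct (dyadic_dense (f y g) (f x g)) as [n1 [k1 [_ [Hr1 Hr2]]]]; try lra.
      destruct (dyadic_dense (dy k1 n1) (f x g)) as [n2 [k2 [_ [Hs1 Hs2]]]]; try lra.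
      destruct (gap_lemma K le Hlin Hc (fun w => dy k2 n2 <= f w g) (fun w => f w g <= dy k1 n1) x y)
        as [a [b [Ha [Hab [Hb [Pa [Qb Hz]]]]]]]; auto; simpl; try lra.
      assert (Habl : lt_of le a b). { split; auto. intro; subst; lra. }
      assert (Hgood : good le f (a, b) (g, ((k1, n1), (k2, n2)))).
      { unfold good, wr, ws; simpl. split; [lra|]. split; [|split; lra].
        intros z H1 H2. destruct (Hz z H1 H2). split; lra. }
      exists (exist _ (a, b) (conj Habl (ex_intro _ _ Hgood))). simpl. auto.
Qed.

Theorem lemma4 (K : Type) (le : K -> K -> Prop)
  (Hlin : linear_order le) (Hcpt : compact_space (order_open le)) :
  almost_totally_disconnected (order_open le) <->
  exists (I : Type) (a b : I -> K),
    (forall i, lt_of le (a i) (b i)) /\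
    (forall x, countable (fun i => lt_of le (a i) x /\ lt_of le x (b i))) /\
    (forall x y, lt_of le x y ->
       exists i, le x (a i) /\ lt_of le (a i) (b i) /\ le (b i) y).
Proof.
  split.
  - apply dir12; auto.
  - intros [I [a [b [H1 [H2 H3]]]]]. eapply dir21; eauto.
Qed.
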